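(* Let $\nu_1,\nu_2\in\mathbb C^\times$ and let $\nu_{ij}\in\mathbb C$ ($i=1,2$, $j=1,2,3$) satisfy $$\nu_{12}-\nu_{13}=\nu_{21}-\nu_{22}.$$ Put $a_i=\sum_{j=1}^3\nu_{ij}G_j\in\mathfrak g$ for $i=1,2$. Then there is a unique algebra automorphism $\theta$ of $\mathrm U_q(\mathfrak{gl}_3)$ such that $$\theta(E_i)=\nu_i E_i\,q^{a_i},\qquad \theta(F_i)=\nu_i^{-1}q^{-a_i}F_i\quad(i=1,2),\qquad \theta(q^X)=q^X\quad(X\in\mathfrak g).$$
   Context: Setting: $\hbar\in\mathbb C$, $q=e^\hbar$, $q^2\neq1$, $\kappa_q=q-q^{-1}$, $[\nu]_q=(q^\nu-q^{-\nu})/\kappa_q$. Let $\mathfrak g=\mathbb CG_1\oplus\mathbb CG_2\oplus\mathbb CG_3$ and define linear forms $\alpha_1,\alpha_2$ on $\mathfrak g$ by $\alpha_1(G_1)=1,\alpha_1(G_2)=-1,\alpha_1(G_3)=0$, $\alpha_2(G_1)=0,\alpha_2(G_2)=1,\alpha_2(G_3)=-1$; put $H_1=G_1-G_2$, $H_2=G_2-G_3$. $\mathrm U_q(\mathfrak{gl}_3)$ is the unital associative $\mathbb C$-algebra generated by $E_1,E_2,F_1,F_2$ and symbols $q^X$, $X\in\mathfrak g$, with relations $q^0=1$, $q^{X_1}q^{X_2}=q^{X_1+X_2}$, $q^XE_iq^{-X}=q^{\alpha_i(X)}E_i$, $q^XF_iq^{-X}=q^{-\alpha_i(X)}F_i$,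 $[E_i,F_j]=\delta_{ij}(q^{H_i}-q^{-H_i})/\kappa_q$, and for $i\ne j$ the $q$-Serre relations $E_i^2E_j-[2]_qE_iE_jE_i+E_jE_i^2=0$, $F_i^2F_j-[2]_qF_iF_jF_i+F_jF_i^2=0$. For $\nu\in\mathbb C$ one writes $q^{X+\nu}=q^\nu q^X$. *)

(* Defs.v *)
From HB Require Import structures.
From mathcomp Require Import all_boot all_order all_algebra.
Set Implicit Arguments. Unset Strict Implicit. Unset Printing Implicit Defensive.
Import GRing.Theory.
Local Open Scope ring_scope.

Section Uq.
Variables (K : fieldType) (e : K -> K) (hbar : K).
(* e plays the role of the exponential: q = e hbar, q^nu = e (hbar * nu) *)
Definition qq : K := e hbar.
Definition qpow (nu : K) : K := e (hbar * nu).
Definition kappa : K := qq - qq^-1.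
Definition qint (nu : K) : K := (qpow nu - qpow (- nu)) / kappa.

(* g = K G_1 + K G_2 + K G_3, realised as row vectors; G j = j-th basis vector *)
Definition G (j : 'I_3) : 'rV[K]_3 := delta_mx 0 j.
Definition alpha (i : 'I_2) (X : 'rV[K]_3) : K :=
  X 0 (inord i) - X 0 (inord i.+1).
Definition H (i : 'I_2) : 'rV[K]_3 := G (inord i) - G (inord i.+1).

Definition Uq_rels (A : algType K) (E F : 'I_2 -> A) (Q : 'rV[K]_3 -> A) : Prop :=
  [/\ Q 0 = 1,
      (forall X Y, Q X * Q Y = Q (X + Y)),
      (forall X i, Q X * E i * Q (- X) = qpow (alpha i X) *: E i),
      (forall X i, Q X * F i * Q (- X) = qpow (- alpha i X) *: F i) &
      [/\ (forall i j, E i * F j - F j * E i =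
            (if i == j then kappa^-1 *: (Q (H i) - Q (- H i)) else 0)),
          (forall i j, i != j ->
            E i ^+ 2 * E j - qint 2 *: (E i * E j * E i) + E j * E i ^+ 2 = 0) &
          (forall i j, i != j ->
            F i ^+ 2 * F j - qint 2 *: (F i * F j * F i) + F j * F i ^+ 2 = 0)]].

Definition alg_hom (A B : algType K) (f : A -> B) : Prop :=
  [/\ (forall x y, f (x + y) = f x + f y),
      (forall x y, f (x * y) = f x * f y),
      f 1 = 1 &
      (forall (k : K) x, f (k *: x) = k *: f x)].

Definition alg_aut (A : algType K) (f : A -> A) : Prop :=
  alg_hom f /\ bijective f.

(* (A; E, F, Q) is U_q(gl_3): it satisfies the relations and is universal
   (initial) among K-algebras with elements satisfying the relations. *)
Definition is_Uq (A : algType K) (E F : 'I_2 -> A) (Q : 'rV[K]_3 -> A) : Prop :=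
  Uq_rels E F Q /\
  forall (B : algType K) (E' F' : 'I_2 -> B) (Q' : 'rV[K]_3 -> B),
    Uq_rels E' F' Q' ->
    exists f : A -> B,
      [/\ alg_hom f, (forall i, f (E i) = E' i), (forall i, f (F i) = F' i),
          (forall X, f (Q X) = Q' X) &
          (forall g : A -> B, alg_hom g -> (forall i, g (E i) = E' i) ->
             (forall i, g (F i) = F' i) -> (forall X, g (Q X) = Q' X) ->
             forall x, g x = f x)].
End Uq.

(* Main.v *)
Require Import Defs.
From HB Require Import structures.
From mathcomp Require Import all_boot all_order all_algebra.
From mathcomp Require Import ring.
Import GRing.Theory.
Local Open Scope ring_scope.

Section Twist.
Variables (K : fieldType) (e : K -> K) (he0 : e 0 = 1)
  (heD : forall x y, e (x + y) = e x * e y) (hbar : K)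
  (A : algType K) (E F : 'I_2 -> A) (Q : 'rV[K]_3 -> A)
  (HR : Uq_rels e hbar E F Q).

Local Notation p := (qpow e hbar).
Local Notation al := (@alpha K).

Lemma pD x y : p (x + y) = p x * p y.
Proof. by rewrite /qpow mulrDr heD. Qed.
Lemma p0 : p 0 = 1.
Proof. by rewrite /qpow mulr0 he0. Qed.
Lemma alD i X Y : al i (X + Y) = al i X + al i Y.
Proof. rewrite /alpha !mxE; ring. Qed.
Lemma alN i X : al i (- X) = - al i X.
Proof. rewrite /alpha !mxE; ring. Qed.

Lemma Q0 : Q 0 = 1. Proof. by case: HR. Qed.
Lemma QD X Y : Q X * Q Y = Q (X + Y). Proof. by case: HR. Qed.
Lemma QC X Y : Q X * Q Y = Q Y * Q X. Proof. by rewrite !QD addrC. Qed.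
Lemma QNK X : Q (- X) * Q X = 1. Proof. by rewrite QD addNr Q0. Qed.
Lemma QKN X : Q X * Q (- X) = 1. Proof. by rewrite QD addrN Q0. Qed.

Lemma QE X i : Q X * E i = p (al i X) *: (E i * Q X).
Proof.
case: HR => _ _ h _ _.
by rewrite -[Q X * E i]mulr1 -(QNK X) mulrA h -scalerAl.
Qed.
Lemma QF X i : Q X * F i = p (- al i X) *: (F i * Q X).
Proof.
case: HR => _ _ _ h _.
by rewrite -[Q X * F i]mulr1 -(QNK X) mulrA h -scalerAl.
Qed.
Lemma FQ X i : F i * Q X = p (al i X) *: (Q X * F i).
Proof. by rewrite QF scalerA -pD addrN p0 scale1r. Qed.

Lemma QEw X i w : Q X * (E i * w) = p (al i X) *: (E i * (Q X * w)).
Proof. by rewrite mulrA QE -scalerAl -mulrA. Qed.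
Lemma QQw X Y w : Q X * (Q Y * w) = Q (X + Y) * w.
Proof. by rewrite mulrA QD. Qed.
Lemma FQw X i w : w * F i * Q X = p (al i X) *: (w * Q X * F i).
Proof. by rewrite -mulrA FQ -scalerAr mulrA. Qed.
Lemma wQQ X Y w : w * Q X * Q Y = w * Q (X + Y).
Proof. by rewrite -mulrA QD. Qed.
Lemma wQE X i w : w * Q X * E i = p (al i X) *: (w * E i * Q X).
Proof. by rewrite -mulrA QE -scalerAr mulrA. Qed.
Lemma wQF X i w : w * Q X * F i = p (- al i X) *: (w * F i * Q X).
Proof. by rewrite -mulrA QF -scalerAr mulrA. Qed.

Lemma comb (c1 c2 c3 k : K) (w1 w2 w3 q : A) : c2 = c1 -> c3 = c1 ->
  c1 *: (w1 * q) - k *: (c2 *: (w2 * q)) + c3 *: (w3 * q) =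
  c1 *: ((w1 - k *: w2 + w3) * q).
Proof.
move=> -> ->; rewrite mulrDl mulrBl scalerDr scalerBr -scalerAl.
by rewrite !scalerA mulrC.
Qed.
Lemma comb' (c1 c2 c3 k : K) (w1 w2 w3 q : A) : c2 = c1 -> c3 = c1 ->
  c1 *: (q * w1) - k *: (c2 *: (q * w2)) + c3 *: (q * w3) =
  c1 *: (q * (w1 - k *: w2 + w3)).
Proof.
move=> -> ->; rewrite mulrDr mulrBr scalerDr scalerBr -scalerAr.
by rewrite !scalerA mulrC.
Qed.
Lemma al0 i : al i 0 = 0.
Proof. by rewrite /alpha !mxE subrr. Qed.

Variables (nu : 'I_2 -> K) (a : 'I_2 -> 'rV[K]_3).
Let E' i := nu i *: (E i * Q (a i)).
Let F' i := (nu i)^-1 *: (Q (- a i) * F i).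

Lemma E3 i j k : E' i * E' j * E' k =
  (nu i * nu j * nu k * p (al j (a i) + al k (a i + a j))) *:
    (E i * E j * E k * Q (a i + a j + a k)).
Proof.
rewrite /E' -!scalerAl -!scalerAr !scalerA -!mulrA.
do ![rewrite QEw|rewrite QQw|rewrite QD|rewrite -scalerAr|rewrite -scalerAl|rewrite scalerA|rewrite -mulrA].
rewrite pD; congr (_ *: _); ring.
Qed.

Lemma F3 i j k : F' i * F' j * F' k =
  ((nu i)^-1 * (nu j)^-1 * (nu k)^-1 * p (al i (- a j) + al i (- a k) + al j (- a k))) *:
    (Q (- a i + - a j + - a k) * (F i * F j * F k)).
Proof.
rewrite /F' -!scalerAl -!scalerAr !scalerA !mulrA.
do ![rewrite FQw|rewrite wQQ|rewrite QD|rewrite -scalerAr|rewrite -scalerAl|rewrite scalerA|rewrite mulrA].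
rewrite !pD; congr (_ *: _); ring.
Qed.

Lemma EF i j : E' i * F' j =
  (nu i * (nu j)^-1 * p (- al j (a i + - a j))) *: (E i * F j * Q (a i + - a j)).
Proof.
rewrite /E' /F' -!scalerAl -!scalerAr !scalerA !mulrA.
do ![rewrite wQF|rewrite wQE|rewrite wQQ|rewrite -scalerAr|rewrite -scalerAl|rewrite scalerA|rewrite mulrA].
rewrite !(alD, alN, opprD, opprK, pD); congr (_ *: _); ring.
Qed.
Lemma FE i j : F' j * E' i =
  (nu i * (nu j)^-1 * p (- al j (- a j) + al i (- a j))) *: (F j * E i * Q (- a j + a i)).
Proof.
rewrite /E' /F' -!scalerAl -!scalerAr !scalerA !mulrA QF -!scalerAl scalerA.
do ![rewrite wQF|rewrite wQE|rewrite wQQ|rewrite -scalerAr|rewrite -scalerAl|rewrite scalerA|rewrite mulrA].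
rewrite !(alD, alN, opprD, opprK, pD); congr (_ *: _); ring.
Qed.

Lemma twist (hnu : forall i, nu i != 0) (hc : forall i j, al i (a j) = al j (a i)) :
  Uq_rels e hbar (fun i => nu i *: (E i * Q (a i)))
    (fun i => (nu i)^-1 *: (Q (- a i) * F i)) Q.
Proof.
change (Uq_rels e hbar E' F' Q).
have HR' := HR.
case: HR' => q0 qd hE hF [hEF hSE hSF].
split => //.
- move=> X i; rewrite /E' -scalerAr -scalerAl -!mulrA (QC (a i)) !mulrA hE.
  by rewrite -!scalerAl !scalerA mulrC.
- move=> X i; rewrite /F' -scalerAr -scalerAl !mulrA (QC X) -!mulrA (mulrA (Q X)) hF.
  by rewrite -scalerAr !scalerA mulrC.
split.
- move=> i j; rewrite EF (FE i j) [- a j + a i]addrC.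
  have -> : p (- al j (- a j) + al i (- a j)) = p (- al j (a i + - a j)).
    by rewrite alD !alN (hc i j); congr qpow; ring.
  rewrite -scalerBr -mulrBl hEF.
  case: eqP => [<-|_]; last by rewrite mul0r scaler0.
  by rewrite addrN Q0 mulr1 al0 oppr0 p0 mulr1 mulfV ?scale1r.
- move=> i j hij; have := hSE i j hij; rewrite !expr2 mulrA => h.
  rewrite mulrA !E3.
  rewrite [a i + a j + a i]addrAC [a j + a i]addrC [a i + a j + a i]addrAC.
  rewrite comb ?h ?mul0r ?scaler0 //; rewrite !alD (hc i j) !pD; ring.
- move=> i j hij; have := hSF i j hij; rewrite !expr2 mulrA => h.
  rewrite mulrA !F3.
  rewrite [- a i + - a j + - a i]addrAC [- a j + - a i]addrC [- a i + - a j + - a i]addrAC.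
  rewrite comb' ?h ?mulr0 ?scaler0 //; rewrite !alN (hc i j) !pD; ring.
Qed.
End Twist.

Lemma I2 (i : 'I_2) : i = inord 0 \/ i = inord 1.
Proof.
case: i => [[|[|m]] h].
- by left; apply/val_inj; rewrite /= inordK.
- by right; apply/val_inj; rewrite /= inordK.
- by [].
Qed.

Lemma aE (K : fieldType) (c : 'I_3 -> K) k :
  (\sum_(j < 3) c j *: G K j) 0 k = c k.
Proof.
rewrite summxE (bigD1 k) //= big1 => [|j hj]; rewrite !mxE ?eqxx ?mulr1 ?addr0 //.
by rewrite eq_sym (negbTE hj) andbF mulr0.
Qed.

Theorem mainTheorem1 (K : fieldType) (e : K -> K)
  (he0 : e 0 = 1) (heD : forall x y, e (x + y) = e x * e y)
  (hbar : K) (hq : qq e hbar ^+ 2 != 1)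
  (A : algType K) (E F : 'I_2 -> A) (Q : 'rV[K]_3 -> A)
  (HU : is_Uq e hbar E F Q)
  (nu : 'I_2 -> K) (hnu : forall i, nu i != 0)
  (nuij : 'I_2 -> 'I_3 -> K)
  (hcond : nuij (inord 0) (inord 1) - nuij (inord 0) (inord 2)
           = nuij (inord 1) (inord 0) - nuij (inord 1) (inord 1)) :
  let a (i : 'I_2) : 'rV[K]_3 := \sum_(j < 3) nuij i j *: G K j in
  let P (theta : A -> A) : Prop :=
    [/\ alg_aut theta,
        (forall i, theta (E i) = nu i *: (E i * Q (a i))),
        (forall i, theta (F i) = (nu i)^-1 *: (Q (- a i) * F i)) &
        (forall X, theta (Q X) = Q X)] in
  exists theta : A -> A, P theta /\
    forall theta' : A -> A, P theta' -> forall x, theta' x = theta x.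
Proof.
move=> a P.
have hc : forall i j, alpha i (a j) = alpha j (a i).
  have hal : forall i j, alpha i (a j) = nuij j (inord i) - nuij j (inord i.+1).
    by move=> i j; rewrite /alpha !aE.
  move=> i j; rewrite !hal.
  case: (I2 i) => ->; case: (I2 j) => ->; rewrite ?inordK //.
case: HU => HR Hun.
have T1 := @twist K e he0 heD hbar A E F Q HR nu a hnu hc.
have hnu' : forall i, (nu i)^-1 != 0 by move=> i; rewrite invr_neq0.
have hc' : forall i j, alpha i (- a j) = alpha j (- a i).
  by move=> i j; rewrite !alN hc.
have T2 := @twist K e he0 heD hbar A E F Q HR (fun i => (nu i)^-1)
  (fun i => - a i) hnu' hc'.
have [th [hth thE thF thQ thU]] := Hun A _ _ Q T1.
have [th2 [hth2 th2E th2F th2Q _]] := Hun A _ _ Q T2.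
have [f0 [_ _ _ _ u0]] := Hun A E F Q HR.
have QKN' := @QKN K e hbar A E F Q HR.
have QNK' := @QNK K e hbar A E F Q HR.
have homid : alg_hom (A:=A) (B:=A) id by [].
have homc : forall f g : A -> A, alg_hom f -> alg_hom g -> alg_hom (fun x => f (g x)).
  move=> f g [f1 f2 f3 f4] [g1 g2 g3 g4]; split.
  - by move=> x y; rewrite g1 f1.
  - by move=> x y; rewrite g2 f2.
  - by rewrite g3 f3.
  - by move=> k x; rewrite g4 f4.
have idE : forall x, x = f0 x.
  by move=> x; apply: (u0 id).
have [h1 h2 h3 h4] := hth.
have [k1 k2 k3 k4] := hth2.
have c1 : cancel th2 th.
  move=> x; rewrite [RHS]idE; apply: (u0 (fun x => th (th2 x))) => //.
  - by apply: homc.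
  - move=> i; rewrite th2E h4 h2 thE thQ -scalerAl scalerA mulVf // scale1r.
    by rewrite -mulrA QKN' mulr1.
  - move=> i; rewrite th2F h4 h2 thF thQ opprK -scalerAr scalerA invrK mulfV //.
    by rewrite scale1r mulrA QKN' mul1r.
  - by move=> X; rewrite th2Q thQ.
have c2 : cancel th th2.
  move=> x; rewrite [RHS]idE; apply: (u0 (fun x => th2 (th x))) => //.
  - by apply: homc.
  - move=> i; rewrite thE k4 k2 th2E th2Q -scalerAl scalerA mulfV // scale1r.
    by rewrite -mulrA QNK' mulr1.
  - move=> i; rewrite thF k4 k2 th2F th2Q -scalerAr scalerA invrK mulVf //.
    by rewrite opprK scale1r mulrA QNK' mul1r.
  - by move=> X; rewrite thQ th2Q.
exists th; split.
  by split => //; split => //; exists th2.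
move=> th' [[hom' _] hE' hF' hQ'] x.
by apply: thU.
Qed.
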